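(* If $G$ is a regular hypo-efficient domination graph having at least one $\gamma$-critical vertex, then $|V(G)|=(\Delta(G)+1)(\gamma(G)-1)+1=(\delta(G)+1)(\gamma(G)-1)+1$.
   Context: All graphs are finite, simple and undirected. For $v\in V(G)$, $N[v]$ is the closed neighborhood of $v$. A set $D\subseteq V(G)$ is dominating if every vertex of $G$ not in $D$ has a neighbor in $D$; $\gamma(G)$ is the minimum size of a dominating set. A vertex $v$ is $\gamma$-critical if $\gamma(G-v)<\gamma(G)$. A set $D\subseteq V(H)$ is an efficient dominating set (EDS) of $H$ if $|N_H[v]\cap D|=1$ for every $v\in V(H)$. $G$ is a hypo-efficient domination graph if $G$ has no EDS but $G-v$ has at least one EDS for every $v\in V(G)$. $\delta(G)$, $\Delta(G)$ are the minimum and maximum degree. *)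

(* Defs.v *)
From mathcomp Require Import all_boot.
Set Implicit Arguments. Unset Strict Implicit. Unset Printing Implicit Defensive.

(* Subgraphs G - v are handled as induced subgraphs
   G[S] on a vertex set S : {set T}; the whole graph is G[setT]. *)

Section Graph.
Variables (T : finType) (e : rel T).

Definition simple_graph : Prop := symmetric e /\ irreflexive e.

Definition cnbhd (S : {set T}) (v : T) : {set T} :=
  [set u in S | (u == v) || e v u].

Definition dominating (S D : {set T}) : bool :=
  (D \subset S) && [forall x in S, (x \in D) || [exists y in D, e x y]].

(* domination number of G[S] (S itself is always dominating) *)
Definition gamma (S : {set T}) : nat :=
  \big[minn/#|S|]_(D : {set T} | dominating S D) #|D|.

Definition EDS (S D : {set T}) : bool :=
  (D \subset S) && [forall v in S, #|cnbhd S v :&: D| == 1].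

Definition has_EDS (S : {set T}) : Prop := exists D, EDS S D.

Definition hypo_efficient : Prop :=
  ~ has_EDS setT /\ forall v : T, has_EDS (setT :\ v).

Definition gamma_critical (v : T) : Prop := gamma (setT :\ v) < gamma setT.

Definition deg (v : T) : nat := #|[set u | e v u]|.

Definition maxdeg : nat := \max_(v : T) deg v.
Definition mindeg : nat := \big[minn/#|T|]_(v : T) deg v.

Definition regular : Prop := forall u v : T, deg u = deg v.
End Graph.

(* Main.v *)
Require Import Defs.
From mathcomp Require Import all_boot.
From mathcomp Require Import zify.
Set Implicit Arguments.

Lemma bigminn_le (I : finType) (P : pred I) (F : I -> nat) x j :
  P j -> \big[minn/x]_(i | P i) F i <= F j.
Proof.
move=> Pj; have : j \in index_enum I by rewrite mem_index_enum.
elim: (index_enum _) => [|a r IH] //; rewrite big_cons in_cons.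
case/orP => [/eqP <-|Hr]; first by rewrite Pj geq_minl.
case: (P a); last exact: IH.
exact: leq_trans (geq_minr _ _) (IH Hr).
Qed.

Section Aux.
Variables (T : finType) (e : rel T).
Hypothesis sym : symmetric e.
Hypothesis irr : irreflexive e.

Lemma card_sum (X B : {set T}) : #|X :&: B| = \sum_(b in B) (b \in X).
Proof.
rewrite -sum1_card big_mkcond [RHS]big_mkcond /=.
apply: eq_bigr => i _; rewrite !inE; by case: (i \in X); case: (i \in B).
Qed.

Lemma dcount (S A B : {set T}) : A \subset S -> B \subset S ->
  \sum_(a in A) #|cnbhd e S a :&: B| = \sum_(b in B) #|cnbhd e S b :&: A|.
Proof.
move=> /subsetP AS /subsetP BS.
under eq_bigr => a _ do rewrite card_sum.
under [RHS]eq_bigr => b _ do rewrite card_sum.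
rewrite exchange_big /=.
apply: eq_bigr => b Hb; apply: eq_bigr => a Ha.
rewrite !inE (AS a Ha) (BS b Hb) /= eq_sym (sym a b) //.
Qed.

Lemma EDS_card (S D : {set T}) : EDS e S D -> #|S| = \sum_(d in D) #|cnbhd e S d|.
Proof.
case/andP => DS /forall_inP H.
have -> : #|S| = \sum_(u in S) #|cnbhd e S u :&: D|.
  rewrite -sum1_card; apply: eq_bigr => u Hu; by rewrite (eqP (H u Hu)).
rewrite dcount //; apply: eq_bigr => d _; rewrite (setIidPl _) //.
apply/subsetP => u; by rewrite inE => /andP [].
Qed.

Lemma EDS_min (S D D' : {set T}) : EDS e S D -> dominating e S D' -> #|D| <= #|D'|.
Proof.
move=> HD; have := HD; case/andP => DS /forall_inP H.
case/andP => D'S /forall_inP H'.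
have -> : #|D'| = \sum_(d in D') #|cnbhd e S d :&: D|.
  rewrite -sum1_card; apply: eq_bigr => u Hu.
  by rewrite (eqP (H u (subsetP D'S u Hu))).
rewrite -dcount // -sum1_card; apply: leq_sum => d Hd.
have dS := subsetP DS d Hd.
case/orP: (H' d dS) => [HdD'|/existsP [y /andP [yD' edy]]];
  rewrite card_gt0; apply/set0Pn.
  by exists d; rewrite !inE eqxx dS.
by exists y; rewrite !inE edy orbT yD' (subsetP D'S y yD').
Qed.

Lemma gamma_le (S D : {set T}) : dominating e S D -> gamma e S <= #|D|.
Proof.
move=> HD; rewrite /gamma.
have : D \in index_enum {set T} by rewrite mem_index_enum.
elim: (index_enum _) => [|a r IH] //; rewrite big_cons in_cons.
case/orP => [/eqP <-|Hr]; first by rewrite HD geq_minl.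
case: (dominating e S a); last exact: IH.
exact: leq_trans (geq_minr _ _) (IH Hr).
Qed.

Lemma gamma_ge (S : {set T}) n : n <= #|S| -> (forall D, dominating e S D -> n <= #|D|) ->
  n <= gamma e S.
Proof.
move=> H1 H2; rewrite /gamma; elim/big_ind: _ => //.
  by move=> x y; rewrite leq_min => -> ->.
Qed.
End Aux.

Theorem corollary3p17 (T : finType) (e : rel T) :
  simple_graph e -> regular e -> hypo_efficient e ->
  (exists v : T, gamma_critical e v) ->
  #|T| = (maxdeg e).+1 * (gamma e setT - 1) + 1 /\
  #|T| = (mindeg e).+1 * (gamma e setT - 1) + 1.
Proof.
move=> [sym irr] reg [_ hyp] [v crit].
set k := deg e v.
have degk u : deg e u = k by apply: reg.
have Hmax : maxdeg e = k.
  apply/eqP; rewrite eqn_leq; apply/andP; split; last exact: leq_bigmax.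
  rewrite /maxdeg; elim/big_ind: _ => //.
    by move=> x y; rewrite geq_max => -> ->.
  by move=> u _; rewrite degk.
have Hmin : mindeg e = k.
  apply/eqP; rewrite eqn_leq; apply/andP; split.
    by rewrite /mindeg /k; exact: (@bigminn_le T xpredT (deg e) #|T| v).
  rewrite /mindeg; elim/big_ind: _ => //.
  - by rewrite /k /deg max_card.
  - by move=> x y; rewrite leq_min => -> ->.
  - by move=> u _; rewrite degk.
rewrite Hmax Hmin; suff H : #|T| = k.+1 * (gamma e setT - 1) + 1 by [].
set S := setT :\ v.
case: (hyp v) => D HD; rewrite -/S in HD.
have DS := andP HD; case: DS => DS _.
have vD : v \notin D by apply/negP => /(subsetP DS); rewrite !inE eqxx.
have h1 : #|D| <= gamma e S.
  apply: gamma_ge; first exact: subset_leq_card.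
  by move=> D' HD'; exact: (EDS_min sym _ _ _ HD HD').
have crit' : gamma e S < gamma e setT := crit.
have noadj : forall d, d \in D -> ~~ e d v.
  move=> d Hd; apply/negP => edv.
  have : dominating e setT D.
    apply/andP; split; first exact: subset_trans DS (subsetT _).
    apply/forall_inP => x _.
    case: (eqVneq x v) => [->|xv].
      by apply/orP; right; apply/existsP; exists d; rewrite Hd sym.
    case/andP: HD => _ /forall_inP H.
    have xS : x \in S by rewrite !inE xv.
    have : 0 < #|cnbhd e S x :&: D| by rewrite (eqP (H x xS)).
    rewrite card_gt0 => /set0Pn [y]; rewrite !inE => /andP [/andP [_ /orP [/eqP->|exy]] yD].
      by rewrite yD.
    by apply/orP; right; apply/existsP; exists y; rewrite yD.
  move/gamma_le => h2.
  by have := leq_ltn_trans h2 (leq_ltn_trans h1 crit'); rewrite ltnn.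
have h2 : gamma e setT <= #|v |: D|.
  apply: gamma_le; apply/andP; split; first exact: subsetT.
  apply/forall_inP => x _.
  case: (eqVneq x v) => [->|xv]; first by rewrite !inE eqxx.
  case/andP: HD => _ /forall_inP H.
  have xS : x \in S by rewrite !inE xv.
  have : 0 < #|cnbhd e S x :&: D| by rewrite (eqP (H x xS)).
  rewrite card_gt0 => /set0Pn [y]; rewrite !inE => /andP [/andP [_ /orP [/eqP->|exy]] yD].
    by rewrite yD orbT.
  by apply/orP; right; apply/existsP; exists y; rewrite !inE yD orbT.
rewrite cardsU1 vD /= in h2.
have Hg : gamma e setT - 1 = #|D|.
  have := leq_ltn_trans h1 crit'; move: h2; rewrite add1n; lia.
rewrite Hg.
have HS : #|S| = #|D| * k.+1.
  rewrite (EDS_card sym _ _ HD) -sum1_card big_distrl /=.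
  apply: eq_bigr => d Hd; rewrite mul1n -(degk d).
  have dS := subsetP DS d Hd.
  have -> : cnbhd e S d = d |: [set u | e d u].
    apply/setP => u; rewrite !inE.
    case: (eqVneq u d) => [->|ud] /=.
      by move: dS; rewrite !inE andbT => ->.
    case: (eqVneq u v) => [->|uv] /=; last by [].
    by rewrite (negbTE (noadj d Hd)).
  rewrite cardsU1 inE irr /deg add1n //.
have := cardsD1 v setT; rewrite -/S inE cardsT HS => ->; lia.
Qed.
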